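(* Let $0<\theta<\pi$ and $L\ge I(\theta)+\log 2$, where $I(\vartheta)=2\log\sec(\vartheta/2)$. Let $\triangle ABC$ be a geodesic triangle in hyperbolic space with $|CA|>L$, $|CB|>L$ and $\angle C=\pi-\theta$. Then (1) $\angle A+\angle B<e^{(-L+3\log2)/2}\sin(\theta/2)$; (2) $I(\theta)-\dfrac{e^{(-L+5\log 2)/2}\sin(\theta/2)}{L-\log 2}<|CA|+|CB|-|AB|<I(\theta)$. *)

(* Defs.v *)
(* hyperboloid model of hyperbolic n-space H^n (curvature -1). *)
From Stdlib Require Import Reals Lra List.
Open Scope R_scope.

(* Points of R^{n+1} are represented as functions nat -> R; only the
   coordinates 0..n are used. *)

Definition mink (n : nat) (x y : nat -> R) : R :=
  - (x O * y O) + fold_right Rplus 0 (map (fun i => x i * y i) (seq 1 n)).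

Definition hyp_point (n : nat) (x : nat -> R) : Prop :=
  mink n x x = -1 /\ 0 < x O.

Definition arcosh (t : R) : R := ln (t + sqrt (t * t - 1)).

Definition hdist (n : nat) (x y : nat -> R) : R := arcosh (- mink n x y).

(* Unit-speed initial tangent vector (up to positive scaling) at C of the
   geodesic from C to A: the projection of A onto T_C H^n = C^perp. *)
Definition tangent_at (n : nat) (C A : nat -> R) : nat -> R :=
  fun i => A i + mink n A C * C i.

(* Riemannian angle at vertex C of the geodesic triangle ACB, i.e. the angle
   between the geodesic segments CA and CB (the tangent space is spacelike, so
   the Minkowski form is positive definite on it). *)
Definition hangle (n : nat) (C A B : nat -> R) : R :=
  let u := tangent_at n C A in
  let v := tangent_at n C B in
  acos (mink n u v / (sqrt (mink n u u) * sqrt (mink n v v))).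

Definition Ifun (t : R) : R := 2 * ln (1 / cos (t / 2)).

(* Main.v *)
Require Import Defs.
From Stdlib Require Import Reals Lra Psatz List.
Open Scope R_scope.
From Stdlib Require Import Reals Lra Psatz List.

Lemma fold_lin (X Y W : nat -> R) (k : R) (l : list nat) :
  fold_right Rplus 0 (map (fun i => (X i + k * Y i) * W i) l) =
  fold_right Rplus 0 (map (fun i => X i * W i) l) + k * fold_right Rplus 0 (map (fun i => Y i * W i) l).
Proof. induction l as [|a l IH]; simpl; [ring| rewrite IH; ring]. Qed.

Lemma mink_linl n X Y W k : mink n (fun i => X i + k * Y i) W = mink n X W + k * mink n Y W.
Proof. unfold mink. rewrite fold_lin. simpl. ring. Qed.

Lemma mink_sym n X Y : mink n X Y = mink n Y X.
Proof. unfold mink. rewrite (Rmult_comm (X O)). f_equal. f_equal. apply map_ext. intros; ring. Qed.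

Lemma mink_linr n X Y W k : mink n W (fun i => X i + k * Y i) = mink n W X + k * mink n W Y.
Proof. rewrite mink_sym, mink_linl, (mink_sym n X), (mink_sym n Y). ring. Qed.

Lemma tangent_dot n P Q R : mink n P P = -1 ->
  mink n (tangent_at n P Q) (tangent_at n P R) = mink n P Q * mink n P R + mink n Q R.
Proof.
  intros HP. unfold tangent_at.
  rewrite mink_linl, !mink_linr, HP.
  rewrite (mink_sym n Q P), (mink_sym n R P). ring.
Qed.

Lemma hangle_eq n P Q R : mink n P P = -1 -> mink n Q Q = -1 -> mink n R R = -1 ->
  hangle n P Q R = acos ((mink n P Q * mink n P R + mink n Q R) /
     (sqrt (mink n P Q * mink n P Q - 1) * sqrt (mink n P R * mink n P R - 1))).
Proof.
  intros HP HQ HR. unfold hangle. rewrite !tangent_dot by exact HP.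
  rewrite HQ, HR. reflexivity.
Qed.
Lemma arcosh_param (x L : R) : 0 < L -> arcosh x > L ->
  exp L < x + sqrt (x*x - 1) /\ x = ((x + sqrt (x*x - 1)) + / (x + sqrt (x*x - 1)))/2
  /\ sqrt (x*x-1) = ((x + sqrt (x*x - 1)) - / (x + sqrt (x*x - 1)))/2.
Proof.
  intros HL hx. unfold arcosh in hx.
  set (sx := sqrt (x*x-1)) in *.
  assert (Hp : 0 < x + sx).
  { destruct (Rlt_dec 0 (x + sx)) as [h|h]; auto. exfalso.
    unfold ln in hx. destruct (Rlt_dec 0 (x + sx)); [contradiction|lra]. }
  assert (He : exp L < x + sx).
  { apply ln_lt_inv; [apply exp_pos|exact Hp|]. rewrite ln_exp. lra. }
  assert (He1 : 1 < exp L). { rewrite <- exp_0. apply exp_increasing. lra. }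
  assert (Hxx : 0 <= x*x - 1).
  { destruct (Rle_dec 0 (x*x-1)) as [h|h]; auto. exfalso.
    assert (sx = 0) by (apply sqrt_neg_0; lra). nra. }
  assert (Hsx : sx * sx = x*x - 1) by (apply sqrt_sqrt; exact Hxx).
  assert (Hsx0 : 0 <= sx) by apply sqrt_pos.
  assert (Hinv : / (x + sx) = x - sx).
  { field_simplify_eq; [nra| lra]. }
  rewrite Hinv. repeat split; lra.
Qed.
Lemma sin_lb_eq (a:R) : sin_lb a = a - a^3/6 + a^5/120 - a^7/5040.
Proof. unfold sin_lb, sin_approx, sin_term. simpl. field. Qed.

Lemma sin_lower (a : R) : 0 <= a <= 1 -> a - a^3/6 <= sin a.
Proof.
  intros Ha. pose proof PI2_1 as HP.
  destruct (SIN a) as [H1 _]; try lra. rewrite sin_lb_eq in H1.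
  assert (a^7/5040 <= a^5/120).
  { assert (0 <= a^5) by (apply pow_le; lra).
    assert (a^7 <= a^5). { replace (a^7) with (a^5*(a*a)) by ring.
      assert (0 <= a^5) by (apply pow_le; lra).
      assert (a*a <= 1) by nra.
      rewrite <- (Rmult_1_r (a^5)) at 2. apply Rmult_le_compat_l; assumption. } lra. }
  lra.
Qed.

Lemma trig_key (k : R) : 0 < k <= 1/2 -> cos k * (k + k^3/3) <= sin k.
Proof.
  intros Hk.
  pose proof (sin_lower k ltac:(lra)) as Hs.
  pose proof (sin_lower (k/2) ltac:(lra)) as Hs2.
  assert (Hc : cos k = 1 - 2 * sin (k/2) * sin (k/2)).
  { rewrite <- cos_2a_sin. f_equal. field. }
  set (w := k/2 - (k/2)^3/6) in *.
  assert (Hw : 0 <= w) by (unfold w; nra).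
  assert (w*w <= sin (k/2) * sin (k/2)) by nra.
  assert (cos k <= 1 - 2*w*w) by lra.
  assert (0 < k + k^3/3) by nra.
  apply Rle_trans with ((1 - 2*w*w) * (k + k^3/3)).
  - apply Rmult_le_compat_r; lra.
  - unfold w. apply Rle_trans with (k - k^3/6); [|lra].
    assert (E : k - k^3/6 - (1 - 2 * (k / 2 - (k / 2) ^ 3 / 6) * (k / 2 - (k / 2) ^ 3 / 6)) * (k + k ^ 3 / 3)
       = k^5 * (1/8 - (1/72 - 1/1152) * k^2 + k^4/3456)) by field.
    assert (0 <= k^5) by (apply pow_le; lra).
    assert (0 <= 1/8 - (1/72 - 1/1152) * k^2 + k^4/3456) by nra.
    nra.
Qed.
Lemma step3 (s c m h : R) : 0 < s -> 0 < c -> c*c + s*s = 1 -> 0 < m -> 0 < h -> h*h = 2 ->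
  2 <= c*c*(m*m) ->
  2*s*c*(m*m) <= (h*s/m + (h*s/m)^3/3) * ((m*m)*(m*m)*(c*c) - s*s).
Proof.
  intros Hs Hc Hcs Hm Hh Hh2 HM.
  set (t := h/(c*m)).
  assert (Ht : h = t*c*m) by (unfold t; field; split; lra).
  assert (Htp : 0 < t) by (unfold t; apply Rdiv_lt_0_compat; nra).
  assert (E : t*t*(c*c*(m*m)) = 2) by (rewrite <- Hh2, Ht; ring).
  assert (Ht1 : t <= 1) by nra.
  assert (E1 : t*t*(c*c) = 2/(m*m)) by (field_simplify_eq; [lra|nra]).
  assert (E2 : c*c*(m*m) = 2/(t*t)) by (field_simplify_eq; [lra|nra]).
  rewrite Ht.
  replace (t*c*m*s/m) with (t*c*s) by (field; lra).
  replace ((t*c*s)^3) with (t*c*s*(t*t*(c*c))*(s*s)) by ring.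
  rewrite E1.
  replace ((m*m)*(m*m)*(c*c)) with ((m*m)*(c*c*(m*m))) by ring.
  rewrite E2.
  replace ((t * c * s + t * c * s * (2 / (m * m)) * (s * s) / 3) * (m * m * (2 / (t * t)) - s * s))
    with (c*s*((1 + 2*(s*s)/(3*(m*m))) * (2*(m*m)/t - s*s*t))) by (field; split; lra).
  replace (2*s*c*(m*m)) with (c*s*(2*(m*m))) by ring.
  apply Rmult_le_compat_l; [nra|].
  assert (Hm2 : 2 <= m*m) by nra.
  assert (Hg : 2*(m*m) - s*s <= 2*(m*m)/t - s*s*t).
  { assert (2*(m*m) <= 2*(m*m)/t).
    { apply Rmult_le_reg_r with t; [lra|]. field_simplify; nra. }
    nra. }
  assert (Hk : 0 <= 2*(s*s)/(3*(m*m))) by (apply Rmult_le_pos; [nra| apply Rlt_le, Rinv_0_lt_compat; nra]).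
  apply Rle_trans with ((1 + 2*(s*s)/(3*(m*m))) * (2*(m*m) - s*s)).
  - replace ((1 + 2*(s*s)/(3*(m*m))) * (2*(m*m) - s*s)) with
      (2*(m*m) + (s*s)/3 * (1 - 2*(s*s)/(m*m))) by (field; lra).
    assert (0 <= 1 - 2*(s*s)/(m*m)).
    { assert (2*(s*s)/(m*m) <= 1). { apply Rmult_le_reg_r with (m*m); [nra|]. field_simplify; nra. } lra. }
    nra.
  - apply Rmult_le_compat_l; lra.
Qed.
Lemma acos_lt (w k : R) : 0 < k <= 1/2 -> cos k < w -> acos w < k.
Proof.
  intros Hk Hw. pose proof PI2_1 as HP.
  assert (Hck : 0 < cos k) by (apply cos_gt_0; lra).
  destruct (Rle_dec 1 w) as [h|h].
  - unfold acos. destruct (Rle_dec w (-1)); [lra|]. destruct (Rle_dec 1 w); [lra|contradiction].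
  - pose proof (acos_bound w) as Hb.
    apply cos_decreasing_0; try lra.
    rewrite cos_acos; lra.
Qed.

Lemma angle_bound (p q c s m h x sx y sy z : R) :
  0 < s -> 0 < c -> c*c+s*s = 1 -> 0 < m -> 0 < h -> h*h = 2 -> 2 <= c*c*(m*m) ->
  m*m < p -> m*m < q ->
  x = (p + /p)/2 -> sx = (p - /p)/2 -> y = (q + /q)/2 -> sy = (q - /q)/2 ->
  z = x*y + (c*c - s*s)*sx*sy ->
  acos ((z*x - y) / (sqrt (z*z - 1) * sqrt (x*x - 1))) < h*s/m.
Proof.
  intros Hs Hc Hcs Hm Hh Hh2 HM Hp Hq Ex Esx Ey Esy Ez.
  set (M := m*m) in *.
  assert (Hc1 : c*c <= 1) by nra.
  assert (HM2 : 2 <= M) by nra.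
  assert (Hp0 : 0 < p) by lra. assert (Hq0 : 0 < q) by lra.
  assert (Hsx : 0 < sx).
  { subst sx. assert (/p < 1). { rewrite <- Rinv_1. apply Rinv_lt_contravar; lra. } lra. }
  assert (Hsy : 0 < sy).
  { subst sy. assert (/q < 1). { rewrite <- Rinv_1. apply Rinv_lt_contravar; lra. } lra. }
  assert (Fx : x*x - 1 = sx*sx) by (subst x sx; field; lra).
  set (Den := y*sx + x*sy*(c*c - s*s)).
  assert (F1 : z*x - y = sx*Den) by (rewrite Ez; unfold Den; subst x y sx sy; field; split; lra).
  set (N := sy*(2*s*c)).
  assert (Hcs2 : 1 - (c*c-s*s)*(c*c-s*s) = (2*s*c)*(2*s*c)) by nra.
  assert (F2 : (x*x-1)*(z*z-1) = sx*sx*(Den*Den + N*N)).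
  { replace (N*N) with (sy*sy*(1 - (c*c-s*s)*(c*c-s*s))) by (unfold N; rewrite Hcs2; ring).
    rewrite Ez. unfold Den. subst x y sx sy. field. split; lra. }
  set (al := c*c*(q*q) + s*s). set (be := c*c + s*s*(q*q)).
  assert (FD : Den*(2*p*q) = p*p*al - be).
  { assert (Hc2 : c*c = 1 - s*s) by lra. unfold Den, al, be. subst x y sx sy. rewrite Hc2. field. split; lra. }
  assert (FN : N*(2*p*q) = 2*s*c*(p*(q*q-1))) by (unfold N; subst sy; field; lra).
  assert (Hqq : 1 < q*q) by nra.
  assert (Hbe : be <= q*q).
  { unfold be. assert (Hs2 : s*s = 1 - c*c) by lra. rewrite Hs2.
    assert (0 <= c*c*(q*q-1)) by nra. nra. }
  assert (Hpc : 1 < c*c*(p*p)) by nra.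
  assert (Hal : c*c*(q*q) <= al) by (unfold al; nra).
  assert (HD0 : 0 < p*p*al - be) by nra.
  assert (HDen : 0 < Den).
  { assert (0 < Den*(2*p*q)) by lra. assert (0 < 2*p*q) by nra. nra. }
  assert (S2 : (q*q-1)*(M*M*(c*c) - s*s) < M*M*al - be).
  { assert (M*M*al - be - (q*q-1)*(M*M*(c*c) - s*s) = M*M - 1).
    { unfold al, be. assert (Hc2 : c*c = 1 - s*s) by lra. rewrite Hc2. ring. }
    nra. }
  assert (S1 : p*(M*M*al - be) < M*(p*p*al - be)).
  { assert (M*(p*p*al - be) - p*(M*M*al - be) = (p - M)*(M*p*al + be)) by ring.
    assert (0 < al) by (unfold al; nra). assert (0 < be) by (unfold be; nra).
    assert (0 < M*p*al + be) by (assert (0 < M*p) by nra; nra).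
    assert (0 < (p - M)*(M*p*al + be)) by (apply Rmult_lt_0_compat; lra). lra. }
  assert (Hsc : 0 < 2*s*c) by nra.
  assert (Hq1 : 0 < q*q - 1) by nra.
  assert (HMc : 0 < M*M*(c*c) - s*s) by nra.
  assert (Ch : 2*s*c*(p*(q*q-1))*(M*M*(c*c) - s*s) < 2*s*c*M*(p*p*al - be)).
  { assert (p*((q*q-1)*(M*M*(c*c) - s*s)) < p*(M*M*al - be)) by (apply Rmult_lt_compat_l; lra).
    nra. }
  set (k := h*s/m).
  set (U := k + k^3/3).
  assert (S3 : 2*s*c*M <= U*(M*M*(c*c) - s*s)).
  { unfold U, k, M. replace (2*s*c*(m*m)) with (2*s*c*(m*m)) by ring.
    pose proof (step3 s c m h Hs Hc Hcs Hm Hh Hh2 HM) as H3. unfold M in *. nra. }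
  assert (Ch2 : 2*s*c*(p*(q*q-1)) < U*(p*p*al - be)).
  { assert (2*s*c*(p*(q*q-1))*(M*M*(c*c) - s*s) < U*(M*M*(c*c) - s*s)*(p*p*al - be)) by nra.
    nra. }
  assert (HNU : N < U*Den).
  { assert (N*(2*p*q) < U*Den*(2*p*q)) by (replace (U*Den*(2*p*q)) with (U*(Den*(2*p*q))) by ring; rewrite FD, FN; lra).
    assert (0 < 2*p*q) by nra. nra. }
  assert (Hk0 : 0 < k) by (unfold k; apply Rdiv_lt_0_compat; nra).
  assert (Hk2 : k*k <= 1/4).
  { assert (E : k*k = 2*(s*s)/M) by (unfold k, M; rewrite <- Hh2; field; lra).
    rewrite E.
    assert (Hsc4 : s*s*(c*c) <= 1/4).
    { assert (0 <= (c*c-s*s)*(c*c-s*s)) by (pose proof (Rle_0_sqr (c*c-s*s)) as HH; unfold Rsqr in HH; lra).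
      assert (4*(s*s*(c*c)) = 1 - (c*c-s*s)*(c*c-s*s)) by (assert (H1 : (c*c+s*s)*(c*c+s*s) = 1) by (rewrite Hcs; ring); lra). lra. }
    assert (2*(s*s)/M <= s*s*(c*c)).
    { replace (s*s*(c*c)) with (s*s*(c*c)*M/M) by (field; lra).
      unfold Rdiv. apply Rmult_le_compat_r; [left; apply Rinv_0_lt_compat; lra| nra]. }
    lra. }
  assert (Hk1 : k <= 1/2) by nra.
  pose proof (trig_key k ltac:(lra)) as TK.
  pose proof PI2_1 as HPI.
  assert (Hck : 0 < cos k) by (apply cos_gt_0; lra).
  assert (Hsk : 0 < sin k) by (apply sin_gt_0; lra).
  assert (HN0 : 0 < N) by (unfold N; nra).
  assert (KEY : cos k * N < sin k * Den).
  { assert (cos k * N < cos k * (U*Den)) by (apply Rmult_lt_compat_l; lra).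
    assert (cos k * U * Den <= sin k * Den) by (apply Rmult_le_compat_r; unfold U; lra). lra. }
  set (Q := sqrt (Den*Den + N*N)).
  assert (HQ2 : Q*Q = Den*Den + N*N) by (apply sqrt_sqrt; nra).
  assert (HQ0 : 0 <= Q) by apply sqrt_pos.
  assert (HSQ : sqrt (z*z-1) * sqrt (x*x-1) = sx*Q).
  { rewrite Rmult_comm, <- sqrt_mult_alt by nra. rewrite F2.
    rewrite sqrt_mult_alt by nra. rewrite sqrt_square by lra. reflexivity. }
  rewrite F1, HSQ.
  apply acos_lt; [lra|].
  assert (Hsc2 : sin k * sin k + cos k * cos k = 1).
  { pose proof (sin2_cos2 k) as E. unfold Rsqr in E. exact E. }
  assert (HcQ : cos k * Q < Den).
  { assert ((cos k * Q)*(cos k * Q) < Den*Den).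
    { replace ((cos k * Q)*(cos k * Q)) with (cos k * cos k * (Den*Den) + (cos k * N)*(cos k * N))
        by (transitivity (cos k * cos k * (Q*Q)); [rewrite HQ2; ring| ring]).
      assert (0 < cos k * N) by (apply Rmult_lt_0_compat; lra).
      assert ((cos k * N)*(cos k * N) < (sin k * Den)*(sin k * Den))
        by (apply Rmult_le_0_lt_compat; lra).
      nra. }
    nra. }
  assert (HQp : 0 < Q) by nra.
  replace (sx * Den / (sx * Q)) with (Den / Q) by (field; lra).
  apply Rmult_lt_reg_r with Q; [lra|]. field_simplify; lra.
Qed.

Lemma dist_alg (p q c s m x sx y sy z : R) :
  0 < s -> 0 < c -> c*c+s*s = 1 -> 0 < m -> 2 <= c*c*(m*m) ->
  m*m < p -> m*m < q ->
  x = (p + /p)/2 -> sx = (p - /p)/2 -> y = (q + /q)/2 -> sy = (q - /q)/2 ->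
  z = x*y + (c*c - s*s)*sx*sy ->
  1 < z /\ c*c*(p*q) < z + sqrt (z*z-1) /\ z + sqrt (z*z-1) <= c*c*(p*q)*(1 + s*s/(m*m)).
Proof.
  intros Hs Hc Hcs Hm HM Hp Hq Ex Esx Ey Esy Ez.
  set (M := m*m) in *.
  assert (Hc1 : c*c <= 1) by nra.
  assert (HM2 : 2 <= M) by nra.
  assert (Hp0 : 0 < p) by lra. assert (Hq0 : 0 < q) by lra.
  assert (Hc2 : c*c = 1 - s*s) by lra.
  assert (Hpp : 1 < p*p) by nra. assert (Hqq : 1 < q*q) by nra.
  assert (HP1 : 1 < p*q*(p*q)) by nra.
  set (W := c*c*(p*q)).
  assert (HW1 : 1 < W).
  { unfold W. assert (2*q <= c*c*M*q) by nra. nra. }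
  assert (Z2 : 2*z*(p*q) = c*c*(p*p*(q*q) + 1) + s*s*(p*p + q*q)).
  { rewrite Ez; subst x y sx sy. rewrite Hc2. field. split; lra. }
  assert (Hz1 : 1 < z).
  { assert (Hpq : 1 < p*q) by nra.
    assert (A0 : 2*(p*q) <= p*p + q*q) by (pose proof (Rle_0_sqr (p-q)) as HH; unfold Rsqr in HH; lra).
    assert (A1 : 2*(p*q) < p*p*(q*q)+1) by (assert (0 < (p*q-1)*(p*q-1)) by (apply Rmult_lt_0_compat; lra); lra).
    assert (A2 : c*c*(2*(p*q)) < c*c*(p*p*(q*q)+1)) by (apply Rmult_lt_compat_l; nra).
    assert (A3 : s*s*(2*(p*q)) <= s*s*(p*p+q*q)) by (apply Rmult_le_compat_l; nra).
    assert (A4 : 2*(p*q) < 2*z*(p*q)).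
    { rewrite Z2. replace (2*(p*q)) with ((c*c+s*s)*(2*(p*q))) at 1 by (rewrite Hcs; ring). lra. }
    assert (A5 : 2*(p*q)*1 < 2*(p*q)*z) by lra.
    apply Rmult_lt_reg_l in A5; lra. }
  set (S := sqrt (z*z-1)).
  assert (HS2 : S*S = z*z-1) by (apply sqrt_sqrt; nra).
  assert (HS0 : 0 <= S) by apply sqrt_pos.
  split; [exact Hz1|split].
  - assert (E : 2*W*z - W*W - 1 = s*s*(c*c*(p*p+q*q) - 1 - c*c)).
    { unfold W. assert (E2 : 2*W*z = W*(2*z)) by ring.
      replace (2*(c*c*(p*q))*z) with (c*c*(2*z*(p*q))) by ring. rewrite Z2.
      rewrite Hc2. ring. }
    assert (0 < c*c*(p*p+q*q) - 1 - c*c) by nra.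
    assert (0 < 2*W*z - W*W - 1) by (rewrite E; apply Rmult_lt_0_compat; nra).
    destruct (Rle_dec W z) as [h|h]; [nra|].
    assert ((W - z)*(W-z) < S*S) by (rewrite HS2; nra).
    destruct (Rle_dec (W - z) S) as [h2|h2]; [|nra].
    destruct h2 as [h2|h2]; [lra| rewrite h2 in *; lra].
  - set (e0 := (p*p-1)*(q*q-1)/(p*q*(p*q)-1)).
    set (R := p*q*(1 - s*s*e0)).
    assert (He0 : 0 < e0) by (unfold e0; apply Rdiv_lt_0_compat; nra).
    assert (F0 : 1 - e0 = (p*p + q*q - 2)/(p*q*(p*q)-1)) by (unfold e0; field; lra).
    assert (He1 : e0 <= 1).
    { assert (0 <= (p*p + q*q - 2)/(p*q*(p*q)-1)) by (apply Rle_mult_inv_pos; nra). lra. }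
    assert (ID : R*R + 1 - 2*R*z = (s*s*(p*p-1)*(q*q-1)/(p*q*(p*q)-1))^2).
    { replace (2*R*z) with (R*(2*z*(p*q))/(p*q)) by (field; lra). rewrite Z2.
      unfold R, e0. rewrite Hc2. field. split; [lra|]. split; lra. }
    assert (HRW : W <= R).
    { unfold R, W. rewrite Hc2. assert (s*s*e0 <= s*s) by nra. nra. }
    assert (HR0 : 0 < R) by lra.
    assert (H2 : 2*R*z <= R*R + 1).
    { assert (0 <= (s*s*(p*p-1)*(q*q-1)/(p*q*(p*q)-1))^2) by apply pow2_ge_0. lra. }
    assert (HRz : z <= R).
    { assert (R*(2*z) <= R*(2*R)) by nra.
      assert (2*z <= 2*R) by (apply Rmult_le_reg_l with R; lra). lra. }
    assert (HSR : S <= R - z) by nra.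
    apply Rle_trans with R; [lra|].
    assert (HRW2 : R - W = s*s*(p*q)*(1 - e0)) by (unfold R, W; rewrite Hc2; ring).
    rewrite F0 in HRW2.
    assert (Hb : (p*p + q*q - 2)/(p*q*(p*q)-1) <= c*c/M).
    { apply Rle_trans with (2/(M*M)).
      - assert (HB0 : 0 < p*q*(p*q)-1) by lra.
        assert (HM0 : 0 < M*M) by nra.
        apply Rmult_le_reg_r with ((p*q*(p*q)-1)*(M*M)); [apply Rmult_lt_0_compat; lra|].
        replace ((p*p + q*q - 2)/(p*q*(p*q)-1)*((p*q*(p*q)-1)*(M*M))) with ((p*p + q*q - 2)*(M*M)) by (field; lra).
        replace (2/(M*M)*((p*q*(p*q)-1)*(M*M))) with (2*(p*q*(p*q)-1)) by (field; lra).
        assert (M*M <= q*q) by nra. assert (M*M <= p*p) by nra.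
        assert (M*M*(p*p) <= q*q*(p*p)) by (apply Rmult_le_compat_r; lra).
        assert (M*M*(q*q) <= p*p*(q*q)) by (apply Rmult_le_compat_r; lra).
        nra.
      - assert (HM0 : 0 < M*M) by nra.
        apply Rmult_le_reg_r with (M*M); [lra|].
        replace (2/(M*M)*(M*M)) with 2 by (field; lra).
        replace (c*c/M*(M*M)) with (c*c*M) by (field; lra). nra. }
    assert (R - W <= s*s*(p*q)*(c*c/M)).
    { rewrite HRW2. apply Rmult_le_compat_l; [nra|exact Hb]. }
    assert (W*(s*s/M) = s*s*(p*q)*(c*c/M)) by (unfold W; field; lra).
    lra.
Qed.
Lemma angC (x y z sx sy t : R) : 0 < t < PI -> 0 < sx -> 0 < sy ->
  acos ((x*y - z)/(sx*sy)) = PI - t -> z = x*y + cos t * sx * sy.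
Proof.
  intros Ht Hx Hy H.
  set (w := (x*y - z)/(sx*sy)) in *.
  assert (Hw : -1 < w < 1).
  { unfold acos in H. destruct (Rle_dec w (-1)); [lra|]. destruct (Rle_dec 1 w); [lra|]. lra. }
  assert (Hcw : cos (acos w) = w) by (apply cos_acos; lra).
  rewrite H, Rtrigo_facts.cos_pi_minus in Hcw.
  assert (x*y - z = w*(sx*sy)) by (unfold w; field; lra).
  nra.
Qed.

Theorem mainTheorem11 (n : nat) (hn : (2 <= n)%nat) (theta L : R)
  (A B C : nat -> R)
  (htheta : 0 < theta < PI)
  (hL : Ifun theta + ln 2 <= L)
  (hA : hyp_point n A) (hB : hyp_point n B) (hC : hyp_point n C)
  (hCA : hdist n C A > L) (hCB : hdist n C B > L)
  (hangC : hangle n C A B = PI - theta) :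
  hangle n A B C + hangle n B A C < exp ((- L + 3 * ln 2) / 2) * sin (theta / 2)
  /\
  Ifun theta - exp ((- L + 5 * ln 2) / 2) * sin (theta / 2) / (L - ln 2)
    < hdist n C A + hdist n C B - hdist n A B
  /\ hdist n C A + hdist n C B - hdist n A B < Ifun theta.
Proof.
  destruct hA as [hAA _]. destruct hB as [hBB _]. destruct hC as [hCC _].
  pose proof PI2_1 as HPI.
  pose proof ln_lt_2 as Hln2.
  set (c := cos (theta/2)). set (s := sin (theta/2)).
  assert (Hc : 0 < c) by (apply cos_gt_0; lra).
  assert (Hs : 0 < s) by (apply sin_gt_0; lra).
  assert (Hcs : c*c + s*s = 1).
  { pose proof (sin2_cos2 (theta/2)) as E. unfold Rsqr in E. fold s c in E. lra. }
  assert (Hcos : cos theta = c*c - s*s).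
  { unfold c, s. rewrite <- cos_2a. f_equal. field. }
  assert (Hc1 : c < 1).
  { assert (c*c < 1) by nra. nra. }
  assert (HI : Ifun theta = - (2 * ln c)).
  { unfold Ifun. fold c. replace (1 / c) with (/ c) by (field; lra). rewrite ln_Rinv by lra. ring. }
  assert (Hlnc : ln c < 0) by (rewrite <- ln_1; apply ln_increasing; lra).
  assert (HL0 : ln 2 < L) by lra.
  assert (HL0' : 0 < L) by lra.
  set (m := exp (L/2)). set (h := exp (ln 2 / 2)).
  assert (Hm : 0 < m) by apply exp_pos. assert (Hh : 0 < h) by apply exp_pos.
  assert (Hmm : m*m = exp L) by (unfold m; rewrite <- exp_plus; f_equal; field).
  assert (Hhh : h*h = 2) by (unfold h; rewrite <- exp_plus; replace (ln 2/2 + ln 2/2) with (ln 2) by field; apply exp_ln; lra).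
  assert (HM : 2 <= c*c*(m*m)).
  { rewrite Hmm.
    assert (E : exp (- (2 * ln c) + ln 2) = 2 / (c*c)).
    { rewrite exp_plus, exp_Ropp, exp_ln by lra.
      replace (2 * ln c) with (ln c + ln c) by ring. rewrite exp_plus, exp_ln by lra. field. lra. }
    assert (exp (- (2 * ln c) + ln 2) <= exp L).
    { rewrite <- HI. destruct hL as [hl|hl]; [left; apply exp_increasing; exact hl| rewrite hl; lra]. }
    rewrite E in H.
    assert (2 / (c*c) * (c*c) <= exp L * (c*c)) by (apply Rmult_le_compat_r; nra).
    replace (2 / (c*c) * (c*c)) with 2 in H0 by (field; lra). lra. }
  set (x := - mink n C A). set (y := - mink n C B). set (z := - mink n A B).
  assert (ExA : mink n C A = - x) by (unfold x; ring).
  assert (EyB : mink n C B = - y) by (unfold y; ring).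
  assert (EzAB : mink n A B = - z) by (unfold z; ring).
  assert (hx : arcosh x > L) by exact hCA.
  assert (hy : arcosh y > L) by exact hCB.
  destruct (arcosh_param x L HL0' hx) as [Hpx [Hx Hsx]].
  destruct (arcosh_param y L HL0' hy) as [Hqy [Hy Hsy]].
  set (p := x + sqrt (x*x-1)) in *. set (q := y + sqrt (y*y-1)) in *.
  assert (Hpm : m*m < p) by lra. assert (Hqm : m*m < q) by lra.
  assert (HMp : 2 <= m*m) by nra.
  assert (Hsx0 : 0 < sqrt (x*x-1)).
  { rewrite Hsx. assert (/p < 1) by (rewrite <- Rinv_1; apply Rinv_lt_contravar; lra). lra. }
  assert (Hsy0 : 0 < sqrt (y*y-1)).
  { rewrite Hsy. assert (/q < 1) by (rewrite <- Rinv_1; apply Rinv_lt_contravar; lra). lra. }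
  rewrite hangle_eq in hangC by assumption.
  rewrite ExA, EyB, EzAB in hangC.
  replace ((- x * - y + - z) / (sqrt (- x * - x - 1) * sqrt (- y * - y - 1)))
    with ((x*y - z)/(sqrt (x*x-1) * sqrt (y*y-1))) in hangC
    by (replace (- x * - x) with (x*x) by ring; replace (- y * - y) with (y*y) by ring; f_equal; ring).
  apply angC in hangC; [|lra|lra|lra].
  rewrite Hcos in hangC.
  assert (HangA : hangle n A B C < h*s/m).
  { rewrite hangle_eq by assumption.
    rewrite (mink_sym n A C), (mink_sym n B C), ExA, EyB, EzAB.
    replace ((- z * - x + - y) / (sqrt (- z * - z - 1) * sqrt (- x * - x - 1)))
      with ((z*x - y) / (sqrt (z*z - 1) * sqrt (x*x - 1)))
      by (replace (- x * - x) with (x*x) by ring; replace (- z * - z) with (z*z) by ring; f_equal; ring).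
    apply (angle_bound p q c s m h x (sqrt (x*x-1)) y (sqrt (y*y-1)) z); try assumption.
    all: rewrite hangC; ring. }
  assert (HangB : hangle n B A C < h*s/m).
  { rewrite hangle_eq by assumption.
    rewrite (mink_sym n B A), (mink_sym n A C), (mink_sym n B C), EyB, ExA, EzAB.
    replace ((- z * - y + - x) / (sqrt (- z * - z - 1) * sqrt (- y * - y - 1)))
      with ((z*y - x) / (sqrt (z*z - 1) * sqrt (y*y - 1)))
      by (replace (- y * - y) with (y*y) by ring; replace (- z * - z) with (z*z) by ring; f_equal; ring).
    apply (angle_bound q p c s m h y (sqrt (y*y-1)) x (sqrt (x*x-1)) z); try assumption.
    all: rewrite hangC; ring. }
  assert (Ek3 : exp ((- L + 3 * ln 2) / 2) = 2*h/m).
  { replace ((- L + 3 * ln 2) / 2) with (- (L/2) + (ln 2 + ln 2 / 2)) by field.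
    rewrite exp_plus, exp_Ropp, exp_plus, exp_ln by lra. fold m h. field. lra. }
  assert (Ek5 : exp ((- L + 5 * ln 2) / 2) = 4*h/m).
  { replace ((- L + 5 * ln 2) / 2) with (- (L/2) + ((ln 2 + ln 2) + ln 2 / 2)) by field.
    rewrite exp_plus, exp_Ropp, exp_plus, exp_plus, exp_ln by lra. fold m h. field. lra. }
  destruct (dist_alg p q c s m x (sqrt (x*x-1)) y (sqrt (y*y-1)) z Hs Hc Hcs Hm HM Hpm Hqm Hx Hsx Hy Hsy)
    as [Hz1 [Hlow Hup]]; [rewrite hangC; ring|].
  set (r := z + sqrt (z*z-1)) in *.
  assert (Hp0 : 0 < p) by lra. assert (Hq0 : 0 < q) by lra.
  assert (Hdist : hdist n C A + hdist n C B - hdist n A B = ln p + ln q - ln r).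
  { unfold hdist. fold x y z. reflexivity. }
  assert (HW : ln (c*c*(p*q)) = 2 * ln c + ln p + ln q).
  { rewrite !ln_mult by nra. ring. }
  split; [|split].
  - rewrite Ek3, <- (Rmult_comm s) . fold s. 
    replace (s * (2 * h / m)) with (h*s/m + h*s/m) by (field; lra). lra.
  - rewrite Hdist, HI, Ek5. fold s.
    assert (Ht0 : 0 <= s*s/(m*m)) by (apply Rle_mult_inv_pos; nra).
    assert (Hr1 : ln r <= 2 * ln c + ln p + ln q + s*s/(m*m)).
    { apply Rle_trans with (ln (c*c*(p*q)*(1 + s*s/(m*m)))).
      - destruct Hup as [hu|hu]; [left; apply ln_increasing; nra| rewrite hu; lra].
      - rewrite ln_mult by nra. rewrite HW.
        assert (ln (1 + s*s/(m*m)) <= s*s/(m*m)).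
        { rewrite <- (ln_exp (s*s/(m*m))) at 2.
          destruct (exp_ineq1_le (s*s/(m*m))) as [hh|hh]; [left; apply ln_increasing; lra|rewrite hh; lra]. }
        lra. }
    assert (Hd : s*s/(m*m) < 4*h/m * s / (L - ln 2)).
    { assert (Hm2 : L/2 < m) by (unfold m; pose proof (exp_ineq1_le (L/2)); lra).
      assert (Hh1 : 1 < h) by nra.
      assert (Hs1 : s <= 1) by nra.
      assert (s * (L - ln 2) < 4*h*m) by nra.
      apply Rmult_lt_reg_r with ((m*m)*(L - ln 2)/s); [apply Rdiv_lt_0_compat; nra|].
      replace (s*s/(m*m) * ((m*m)*(L - ln 2)/s)) with (s*(L - ln 2)) by (field; lra).
      replace (4*h/m * s / (L - ln 2) * ((m*m)*(L - ln 2)/s)) with (4*h*m) by (field; lra).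
      lra. }
    lra.
  - rewrite Hdist, HI.
    assert (ln (c*c*(p*q)) < ln r) by (apply ln_increasing; [apply Rmult_lt_0_compat; apply Rmult_lt_0_compat; lra|exact Hlow]).
    lra.
Qed.
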